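(* Let $n$ be a positive multiple of $4$, $|\mathrm{GHZ}\rangle=\frac1{\sqrt2}(|0\rangle^{\otimes n}+|1\rangle^{\otimes n})$ and $\rho_{\mathrm{GHZ}}=|\mathrm{GHZ}\rangle\langle\mathrm{GHZ}|$. Then for $\alpha\in\{0,\dots,2n\}$: $\mathcal{P}_\alpha(\rho_{\mathrm{GHZ}})=0$ if $\alpha$ is odd or $\alpha\equiv 2\pmod 4$; $\mathcal{P}_\alpha(\rho_{\mathrm{GHZ}})=\binom{n}{\alpha/2}/2^n$ if $\alpha\equiv 0\pmod 4$ and $\alpha\neq n$; and $\mathcal{P}_n(\rho_{\mathrm{GHZ}})=\frac{2^{n-1}+\binom{n}{n/2}}{2^n}$.
   Context: On $\mathcal{H}=(\mathbb{C}^2)^{\otimes n}$ define the Majorana operators $c_{2j-1}=Z^{\otimes(j-1)}\otimes X\otimes\mathbb{1}^{\otimes(n-j)}$ and $c_{2j}=Z^{\otimes(j-1)}\otimes Y\otimes\mathbb{1}^{\otimes(n-j)}$ for $j=1,\dots,n$. For $\alpha=0,\dots,2n$, $\mathcal{L}_\alpha\subseteq\mathcal{L}(\mathcal{H})$ is the span of the products $c_{i_1}\cdots c_{i_\alpha}$ with $1\le i_1<\dots<i_\alpha\le 2n$. The orthonormal basis used consists of the Hermitian Pauli strings (up to sign) in $\mathcal{L}_\alpha$ divided by $\sqrt{2^n}$, and $\mathcal{P}_\alpha(\rho)=\sum_\mu\mathrm{Tr}[B^\mu\rho]^2$ over this basis. *)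

(* Defs.v *)
From mathcomp Require Import all_boot all_order all_algebra all_field.
Set Implicit Arguments. Unset Strict Implicit. Unset Printing Implicit Defensive.
Import Order.TTheory GRing.Theory Num.Theory.
Local Open Scope ring_scope.

(* Single-qubit Pauli matrices, basis |0> = false, |1> = true. *)
Inductive pauli := PI | PX | PY | PZ.

Definition pmat (p : pauli) (b b' : bool) : algC :=
  match p with
  | PI => if b == b' then 1 else 0
  | PX => if b == b' then 0 else 1
  | PY => if b == b' then 0 else if b' then - 'i else 'i
  | PZ => if b == b' then (if b then -1 else 1) else 0
  end.

(* Computational basis index i < 2^n ; qubit j (0-based, j = 0 is the first,
   i.e. leftmost tensor factor) is the bit of weight 2^(n-1-j). *)
Definition qbit (n : nat) (i : 'I_(2 ^ n)) (j : 'I_n) : bool :=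
  ssrnat.odd (i %/ 2 ^ (n.-1 - j))%N.

Definition pstring (n : nat) (f : 'I_n -> pauli) : 'M[algC]_(2 ^ n) :=
  \matrix_(i, i') \prod_(j < n) pmat (f j) (qbit i j) (qbit i' j).

(* Majorana operators, 0-based: k = 2(j-1) is c_{2j-1} = Z..Z X 1..1,
   k = 2(j-1)+1 is c_{2j} = Z..Z Y 1..1 (j-1 factors Z). *)
Definition majorana (n : nat) (k : 'I_(2 * n)) : 'M[algC]_(2 ^ n) :=
  pstring (fun j : 'I_n =>
    if (j < k %/ 2)%N then PZ
    else if (j == k %/ 2 :> nat)%N then (if ssrnat.odd k then PY else PX)
    else PI).

(* Ordered product c_{i1} ... c_{ia} over i1 < ... < ia in S. *)
Definition majprod (n : nat) (S : {set 'I_(2 * n)}) : 'M[algC]_(2 ^ n) :=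
  foldr (fun A B => A *m B) (1%:M : 'M[algC]_(2 ^ n))
        [seq majorana k | k <- enum S].

Definition adjmx (m p : nat) (A : 'M[algC]_(m, p)) : 'M[algC]_(p, m) :=
  (map_mx (fun x : algC => x^*) A)^T.

(* The Hermitian Pauli string (up to sign) proportional to M, for M a
   Pauli string times a phase in {±1, ±i}. *)
Definition hermPart (N : nat) (M : 'M[algC]_N) : 'M[algC]_N :=
  if adjmx M == M then M else 'i *: M.

(* Orthonormal basis element of L_alpha attached to S. *)
Definition majBasis (n : nat) (S : {set 'I_(2 * n)}) : 'M[algC]_(2 ^ n) :=
  (sqrtC (2 ^ n)%:R)^-1 *: hermPart (majprod S).

Definition Pweight (n alpha : nat) (rho : 'M[algC]_(2 ^ n)) : algC :=
  \sum_(S : {set 'I_(2 * n)} | #|S| == alpha) (\tr (majBasis S *m rho)) ^+ 2.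

Definition ghz (n : nat) : 'cV[algC]_(2 ^ n) :=
  \col_(i < 2 ^ n)
    (if ((i : nat) == 0%N) || ((i : nat) == (2 ^ n).-1) then (sqrtC 2)^-1 else 0).

Definition rhoGHZ (n : nat) : 'M[algC]_(2 ^ n) := ghz n *m adjmx (ghz n).

(* Main.v *)
Require Import Defs.
From mathcomp Require Import all_boot all_order all_algebra all_field zify ring.
Set Implicit Arguments. Unset Strict Implicit. Unset Printing Implicit Defensive.
Import Order.TTheory GRing.Theory Num.Theory.
Local Open Scope ring_scope.

Lemma bits_inj_nat m a b : (a < 2 ^ m)%N -> (b < 2 ^ m)%N ->
  (forall e, (e < m)%N -> odd (a %/ 2 ^ e) = odd (b %/ 2 ^ e)) -> a = b.
Proof.
elim: m a b => [|m IH] a b ha hb h.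
  by move: ha hb; rewrite expn0 !ltnS !leqn0 => /eqP-> /eqP->.
have h0 := h 0%N (ltn0Sn m); rewrite !expn0 !divn1 in h0.
rewrite (divn_eq a 2) (divn_eq b 2) !modn2 h0.
congr (_ * 2 + _)%N; apply: IH.
- by rewrite ltn_divLR // -expnSr.
- by rewrite ltn_divLR // -expnSr.
- move=> e he; rewrite -!divnMA -expnS; apply: h; by [].
Qed.

Definition bitsf n (i : 'I_(2 ^ n)) : {ffun 'I_n -> bool} := [ffun j => qbit i j].

Lemma bitsf_inj n : injective (@bitsf n).
Proof.
move=> i i' /ffunP h; apply/val_inj/(bits_inj_nat (ltn_ord i) (ltn_ord i')) => e he.
have hj : (n.-1 - e < n)%N by lia.
have := h (Ordinal hj); rewrite !ffunE /qbit /=.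
by have -> : (n.-1 - (n.-1 - e) = e)%N by lia.
Qed.

Lemma bitsf_bij n : bijective (@bitsf n).
Proof.
have hi := @bitsf_inj n. apply: (inj_card_bij hi).
by rewrite card_ffun card_bool !card_ord.
Qed.

Definition b2o (b : bool) : 'I_2 := if b then ord_max else ord0.

Lemma b2o_inj : injective b2o. Proof. by case; case. Qed.

Lemma sum_I2 (f : 'I_2 -> algC) : \sum_(k < 2) f k = f (b2o false) + f (b2o true).
Proof.
rewrite !big_ord_recl big_ord0 addr0 /b2o; congr (_ + f _); exact/val_inj.
Qed.

Definition tens n (F : 'I_n -> 'M[algC]_2) : 'M[algC]_(2 ^ n) :=
  \matrix_(i, i') \prod_(j < n) F j (b2o (qbit i j)) (b2o (qbit i' j)).

Lemma tens_mul n (F G : 'I_n -> 'M[algC]_2) :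
  tens F *m tens G = tens (fun j => F j *m G j).
Proof.
apply/matrixP=> i i'; rewrite !mxE.
under eq_bigr do rewrite !mxE -big_split /=.
have [h hK Kh] := bitsf_bij n.
have bh : bijective h by exists (@bitsf n).
rewrite (reindex h) /=; last by apply: onW_bij.
have qh : forall f j, qbit (h f) j = f j.
  by move=> f j; rewrite -[in RHS](Kh f) ffunE.
under eq_bigr do under eq_bigr do rewrite !qh.
rewrite -(bigA_distr_bigA (fun j c => F j (b2o (qbit i j)) (b2o c) * G j (b2o c) (b2o (qbit i' j)))) /=.
apply: eq_bigr => j _; rewrite mxE sum_I2 big_bool /= addrC //.
Qed.

Lemma tens1 n : tens (fun _ : 'I_n => 1%:M) = 1%:M.
Proof.
apply/matrixP=> i i'; rewrite !mxE.
have [->|ne] := eqVneq i i'.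
  by rewrite big1 // => j _; rewrite mxE eqxx.
have : ~~ [forall j, qbit i j == qbit i' j].
  apply: contra ne => /forallP h; apply/eqP/bitsf_inj/ffunP => j.
  by rewrite !ffunE; apply/eqP.
rewrite negb_forall => /existsP [j hj].
rewrite (bigD1 j) //= mxE (inj_eq b2o_inj) (negbTE hj) mul0r.
by [].
Qed.

Lemma eq_tens n (F G : 'I_n -> 'M[algC]_2) : (forall j, F j = G j) -> tens F = tens G.
Proof. by move=> h; apply/matrixP=> i i'; rewrite !mxE; apply: eq_bigr => j _; rewrite h. Qed.

Definition pm (p : pauli) : 'M[algC]_2 :=
  \matrix_(a, b) pmat p (val a == 1%N) (val b == 1%N).

Lemma pm_b2o p b b' : pm p (b2o b) (b2o b') = pmat p b b'.
Proof. by rewrite mxE; case: b; case: b'. Qed.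

Definition pf n (k : nat) (j : 'I_n) : pauli :=
  if (j < k %/ 2)%N then PZ
  else if (j == k %/ 2 :> nat)%N then (if ssrnat.odd k then PY else PX)
  else PI.

Lemma majorana_tens n (k : 'I_(2 * n)) : majorana k = tens (fun j => pm (pf k j)).
Proof. by apply/matrixP=> i i'; rewrite !mxE; apply: eq_bigr => j _; rewrite pm_b2o. Qed.

Lemma foldr_tens n (s : seq 'I_(2 * n)) :
  foldr (fun A B => A *m B) (1%:M : 'M[algC]_(2 ^ n)) [seq majorana k | k <- s] =
  tens (fun j => \prod_(k <- s) pm (pf k j)).
Proof.
elim: s => [|k s IH] /=.
  by rewrite -tens1; apply: eq_tens => j; rewrite big_nil.
rewrite IH majorana_tens tens_mul; apply: eq_tens => j.
by rewrite big_cons mulmxE.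
Qed.

Definition inS n (S : {set 'I_(2 * n)}) (k : nat) : bool := [exists x in S, val x == k].

Lemma inS_val n (S : {set 'I_(2 * n)}) (x : 'I_(2 * n)) : inS S x = (x \in S).
Proof.
apply/existsP/idP => [[y /andP[yS /eqP/val_inj <-]] //|xS].
by exists x; rewrite xS eqxx.
Qed.

Lemma prod_enum n (S : {set 'I_(2 * n)}) (F : nat -> 'M[algC]_2) :
  \prod_(k <- enum S) F (val k) = \prod_(0 <= k < 2 * n) (if inS S k then F k else 1).
Proof.
rewrite -deprecated_filter_index_enum big_filter big_mkcond big_mkord.
by apply: eq_bigr => k _; rewrite inS_val.
Qed.

Lemma prod_pair m (G : nat -> 'M[algC]_2) :
  \prod_(0 <= k < 2 * m) G k = \prod_(0 <= j < m) (G (2 * j)%N * G (2 * j).+1).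
Proof.
elim: m => [|m IH]; first by rewrite !big_geq.
rewrite (_ : (2 * m.+1 = (2 * m).+1.+1)%N); last by lia.
by rewrite !big_nat_recr //= IH mulrA.
Qed.

Definition zp (b : bool) : 'M[algC]_2 := if b then pm PZ else 1.

Lemma I2_cases (a : 'I_2) : a = b2o (val a == 1%N).
Proof. by apply/val_inj; case: a => [[|[|]]]. Qed.

Ltac m2 := apply/matrixP; let a := fresh "a" in let b := fresh "b" in
  intros a b; rewrite (I2_cases a) (I2_cases b);
  case: (val a == 1%N); case: (val b == 1%N);
  rewrite -?mulmxE ?mxE ?sum_I2 ?mxE ?sum_I2 ?mxE ?pm_b2o /=.

Lemma pmZZ : pm PZ * pm PZ = 1.
Proof. by m2; ring. Qed.

Lemma zpD a b : zp (a (+) b) = zp a * zp b.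
Proof. by case: a; case: b; rewrite /zp /= ?mul1r ?mulr1 ?pmZZ. Qed.

Lemma pmI : pm PI = 1.
Proof. by m2. Qed.

Definition Lmat (x y p : bool) : 'M[algC]_2 :=
  (if x then pm PX else 1) * (if y then pm PY else 1) * zp p.

Definition xs n (S : {set 'I_(2 * n)}) (j : nat) := inS S (2 * j).
Definition ys n (S : {set 'I_(2 * n)}) (j : nat) := inS S (2 * j).+1.
Definition ps n (S : {set 'I_(2 * n)}) (j : nat) :=
  \big[addb/false]_(j.+1 <= j' < n) (xs S j' (+) ys S j').

Lemma half2 j : ((2 * j) %/ 2 = j)%N. Proof. by rewrite mulKn. Qed.
Lemma half2S j : ((2 * j).+1 %/ 2 = j)%N.
Proof. by rewrite -addn1 (mulnC 2 j) divnMDl // addn0. Qed.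
Lemma odd2 j : ssrnat.odd (2 * j) = false. Proof. by rewrite oddM. Qed.
Lemma odd2S j : ssrnat.odd (2 * j).+1 = true. Proof. by rewrite oddS odd2. Qed.

Lemma L_eq n (S : {set 'I_(2 * n)}) (j : 'I_n) :
  \prod_(k <- enum S) pm (pf k j) = Lmat (xs S j) (ys S j) (ps S j).
Proof.
rewrite (prod_enum S (fun k => pm (pf k j))) prod_pair.
have hj := ltn_ord j.
rewrite (@big_cat_nat _ _ _ j) //=; last exact: ltnW. rewrite [X in _ * X]big_ltn //.
rewrite big_nat_cond big1 ?mul1r; last first.
  move=> j' /andP[/andP[_ hj'] _].
  rewrite /pf !(half2, half2S) ltnNge (ltnW hj') /= (gtn_eqF hj').
  by case: ifP; case: ifP; rewrite ?pmI ?mul1r.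
rewrite /Lmat /pf !(half2, half2S) ltnn eqxx odd2 odd2S -/(xs S j) -/(ys S j).
congr (_ * _); rewrite /ps (big_morph zp zpD (erefl (zp false))).
rewrite big_nat_cond [in RHS]big_nat_cond; apply: eq_bigr => j' /andP[/andP[hj' _] _].
rewrite /pf !(half2, half2S) hj' -/(xs S j') -/(ys S j') zpD.
by case: (xs S j'); case: (ys S j').
Qed.

Lemma majprod_tens n (S : {set 'I_(2 * n)}) :
  majprod S = tens (fun j => Lmat (xs S j) (ys S j) (ps S j)).
Proof. by rewrite /majprod foldr_tens; apply: eq_tens => j; rewrite L_eq. Qed.

Definition sgb (b : bool) : algC := if b then -1 else 1.

Lemma Lmat_E x y p b b' : Lmat x y p (b2o b) (b2o b') =
  ((b (+) b') == (x (+) y))%:R *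
  (if y then (if (if x then b else b') then - 'i else 'i) else 1) * sgb (p && b').
Proof.
rewrite /Lmat /zp /sgb.
case: x; case: y; case: p; case: b; case: b';
  rewrite ?mul1r ?mulr1 -?mulmxE ?mxE ?sum_I2 ?mxE ?sum_I2 ?mxE ?pm_b2o /=;
  rewrite ?sum_I2 ?mxE ?pm_b2o /=; try ring.
Qed.

Lemma adjE m (A : 'M[algC]_m) i j : adjmx A i j = (A j i)^*.
Proof. by rewrite !mxE. Qed.
Lemma sclE m (c : algC) (A : 'M[algC]_m) i j : (c *: A) i j = c * A i j.
Proof. by rewrite !mxE. Qed.

Definition sgnL x y p := sgb ((x && y) || ((x != y) && p)).

Lemma adj_Lmat x y p : adjmx (Lmat x y p) = sgnL x y p *: Lmat x y p.
Proof.
apply/matrixP => a b'; rewrite (I2_cases a) (I2_cases b').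
case: (val a == 1%N); case: (val b' == 1%N); rewrite adjE sclE !Lmat_E /sgnL /sgb;
case: x; case: y; case: p; rewrite /= ?rmorphM ?rmorphN ?rmorph1 ?rmorph0 ?conjCi ?opprK; try ring.
all: try rewrite [_ 'i]conjCi; try ring.
Qed.

Lemma adj_tens n (F : 'I_n -> 'M[algC]_2) (s : 'I_n -> algC) :
  (forall j, adjmx (F j) = s j *: F j) -> adjmx (tens F) = (\prod_j s j) *: tens F.
Proof.
move=> h; apply/matrixP => i i'; rewrite !mxE rmorph_prod -big_split /=.
by apply: eq_bigr => j _; rewrite -adjE h sclE.
Qed.

Lemma pow2_gt0 n : (0 < 2 ^ n)%N. Proof. by rewrite expn_gt0. Qed.
Lemma pow2_pred n : ((2 ^ n).-1 < 2 ^ n)%N. Proof. by rewrite ltn_predL pow2_gt0. Qed.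
Definition z0 n : 'I_(2 ^ n) := Ordinal (pow2_gt0 n).
Definition zN n : 'I_(2 ^ n) := Ordinal (pow2_pred n).

Lemma qbit_z0 n j : qbit (z0 n) j = false.
Proof. by rewrite /qbit /= div0n. Qed.

Lemma odd_pred_div n e : (e < n)%N -> ssrnat.odd ((2 ^ n).-1 %/ 2 ^ e).
Proof.
move=> he; have -> : n = (e + (n - e))%N by lia.
set d := (n - e)%N; have hd : (0 < d)%N by lia.
rewrite expnD.
have p1 := pow2_gt0 e; have p2 := pow2_gt0 d.
have -> : ((2 ^ e * 2 ^ d).-1 = (2 ^ d).-1 * 2 ^ e + (2 ^ e).-1)%N by nia.
rewrite divnMDl // divn_small ?pow2_pred // addn0.
have : ssrnat.odd (2 ^ d)%N = false by rewrite oddX orbF; apply/negbTE; rewrite -lt0n.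
by rewrite -[(2 ^ d)%N](prednK p2) oddS => /negbFE.
Qed.

Lemma qbit_zN n j : qbit (zN n) j = true.
Proof. rewrite /qbit /=; apply: odd_pred_div; case: j => j /=; lia. Qed.

Lemma z0N n : (0 < n)%N -> zN n != z0 n.
Proof.
move=> hn; apply/eqP => /(congr1 val) /= h.
have : (2 <= 2 ^ n)%N by rewrite -{1}(expn1 2) leq_exp2l.
lia.
Qed.

Lemma sum_two n (hn : (0 < n)%N) (F : 'I_(2 ^ n) -> algC) :
  (forall i : 'I_(2 ^ n), (val i != 0%N) -> (val i != (2 ^ n).-1) -> F i = 0) ->
  \sum_i F i = F (z0 n) + F (zN n).
Proof.
move=> h; rewrite (bigD1 (z0 n)) //= (bigD1 (zN n)) /=; last by rewrite z0N.
rewrite big1 ?addr0 // => i /andP[ne1 ne2]; apply: h.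
  by apply: contra ne1 => /eqP hi; apply/eqP/val_inj.
by apply: contra ne2 => /eqP hi; apply/eqP/val_inj.
Qed.

Definition gs : algC := (sqrtC 2)^-1.

Lemma gs_conj : gs^* = gs.
Proof. by apply: geC0_conj; rewrite invr_ge0 sqrtC_ge0 ler0n. Qed.

Lemma gs2 : gs * gs = 2^-1.
Proof. by rewrite /gs -expr2 exprVn sqrtCK. Qed.

Lemma rhoE n k i : rhoGHZ n k i =
  (if (val k == 0%N) || (val k == (2 ^ n).-1) then gs else 0) *
  (if (val i == 0%N) || (val i == (2 ^ n).-1) then gs else 0).
Proof.
rewrite !mxE big_ord1 !mxE; congr (_ * _).
by case: ifP; rewrite ?rmorph0 ?gs_conj.
Qed.

Lemma tr_rho n (hn : (0 < n)%N) (A : 'M[algC]_(2 ^ n)) :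
  \tr (A *m rhoGHZ n) =
  (A (z0 n) (z0 n) + A (z0 n) (zN n) + A (zN n) (z0 n) + A (zN n) (zN n)) / 2.
Proof.
have hz : (0 != (2 ^ n).-1)%N.
  have : (2 <= 2 ^ n)%N by rewrite -{1}(expn1 2) leq_exp2l.
  lia.
rewrite /mxtrace (sum_two hn); last first.
  move=> i h1 h2; rewrite mxE big1 // => k _.
  by rewrite rhoE (negbTE h1) (negbTE h2) /= !mulr0.
rewrite !mxE !(sum_two hn); last first.
- by move=> i h1 h2; rewrite rhoE (negbTE h1) (negbTE h2) /= mul0r mulr0.
- by move=> i h1 h2; rewrite rhoE (negbTE h1) (negbTE h2) /= mul0r mulr0.
rewrite !rhoE /= ?eqxx ?orbT /= ?gs2.
by ring.
Qed.

Lemma tensE n (F : 'I_n -> 'M[algC]_2) i i' b b' :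
  (forall j, qbit i j = b) -> (forall j, qbit i' j = b') ->
  tens F i i' = \prod_j F j (b2o b) (b2o b').
Proof. by move=> h h'; rewrite mxE; apply: eq_bigr => j _; rewrite h h'. Qed.

Definition qS n (S : {set 'I_(2 * n)}) := \tr (majprod S *m rhoGHZ n).

Definition Lb n (S : {set 'I_(2 * n)}) (j : 'I_n) b b' :=
  Lmat (xs S j) (ys S j) (ps S j) (b2o b) (b2o b').

Lemma qS_E n (hn : (0 < n)%N) (S : {set 'I_(2 * n)}) : qS S =
  (\prod_j Lb S j false false + \prod_j Lb S j false true +
   \prod_j Lb S j true false + \prod_j Lb S j true true) / 2.
Proof.
rewrite /qS tr_rho // majprod_tens.
by rewrite !(tensE _ (@qbit_z0 n) (@qbit_z0 n)) !(tensE _ (@qbit_z0 n) (@qbit_zN n))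
  !(tensE _ (@qbit_zN n) (@qbit_z0 n)) !(tensE _ (@qbit_zN n) (@qbit_zN n)).
Qed.

Lemma prod_zero n (F : 'I_n -> algC) j : F j = 0 -> \prod_j F j = 0.
Proof. by move=> h; rewrite (bigD1 j) //= h mul0r. Qed.

Lemma addb_iter k : iter k (addb true) false = ssrnat.odd k.
Proof. by elim: k => //= k ->. Qed.

Lemma ps_PD n (S : {set 'I_(2 * n)}) :
  (forall j : 'I_n, xs S j = ys S j) -> forall j, ps S j = false.
Proof.
move=> h j; rewrite /ps big_nat_cond big1 // => j' /andP[/andP[_ hj'] _].
by have := h (Ordinal hj') => /= ->; rewrite addbb.
Qed.

Lemma ps_PO n (S : {set 'I_(2 * n)}) :
  (forall j : 'I_n, xs S j != ys S j) -> forall j, ps S j = ssrnat.odd (n - j.+1).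
Proof.
move=> h j; rewrite /ps big_nat_cond (eq_bigr (fun _ => true)); last first.
  move=> j' /andP[/andP[_ hj'] _].
  by have := h (Ordinal hj'); case: (xs S j'); case: (ys S j').
by rewrite -big_nat_cond big_const_nat addb_iter.
Qed.

Lemma prod_sg4 n : (4 %| n)%N -> \prod_(j < n) sgb (ssrnat.odd (n - j.+1)) = 1.
Proof.
move=> h4.
have := big_rev_mkord (@GRing.mul algC) 1 0 n xpredT (fun k => sgb (ssrnat.odd k)).
rewrite subn0 /= => <-.
case/dvdnP: h4 => m ->.
elim: m => [|m IH]; first by rewrite big_geq.
rewrite (_ : (m.+1 * 4 = (m * 4).+4)%N); last by lia.
rewrite !big_nat_recr //= IH oddM andbF /sgb /=.
by ring.
Qed.

Lemma q_PD n (hn : (0 < n)%N) (S : {set 'I_(2 * n)}) :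
  (forall j : 'I_n, xs S j = ys S j) ->
  qS S = (\prod_(j < n) (if xs S j then 'i else 1) + \prod_(j < n) (if xs S j then - 'i else 1)) / 2.
Proof.
move=> h; have h0 := ps_PD h.
rewrite qS_E // (@prod_zero _ (fun j => Lb S j false true) (Ordinal hn));
  last by rewrite /Lb Lmat_E -h addbb /= !mul0r.
rewrite (@prod_zero _ (fun j => Lb S j true false) (Ordinal hn));
  last by rewrite /Lb Lmat_E -h addbb /= !mul0r.
rewrite !addr0; congr ((_ + _) / 2); apply: eq_bigr => j _;
  by rewrite /Lb Lmat_E -h h0 addbb /sgb /=; case: (xs S j); rewrite /= ?mul1r ?mulr1.
Qed.

Lemma q_PO n (hn : (0 < n)%N) (h4 : (4 %| n)%N) (S : {set 'I_(2 * n)}) :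
  (forall j : 'I_n, xs S j != ys S j) ->
  qS S = (\prod_(j < n) (if ys S j then - 'i else 1) + \prod_(j < n) (if ys S j then 'i else 1)) / 2.
Proof.
move=> h; have h0 := ps_PO h.
rewrite qS_E // (@prod_zero _ (fun j => Lb S j false false) (Ordinal hn));
  last by rewrite /Lb Lmat_E; move: (h (Ordinal hn)); case: (xs _ _); case: (ys _ _); rewrite //= !mul0r.
rewrite (@prod_zero _ (fun j => Lb S j true true) (Ordinal hn));
  last by rewrite /Lb Lmat_E; move: (h (Ordinal hn)); case: (xs _ _); case: (ys _ _); rewrite //= !mul0r.
rewrite add0r addr0; congr ((_ + _) / 2).
  rewrite (eq_bigr (fun j : 'I_n => (if ys S j then - 'i else 1) * sgb (ssrnat.odd (n - j.+1)))).
    by rewrite big_split /= prod_sg4 // mulr1.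
  move=> j _; rewrite /Lb Lmat_E h0 andbT; move: (h j).
  by case: (xs S j); case: (ys S j); rewrite /= ?mul1r ?mulr1.
apply: eq_bigr => j _; rewrite /Lb Lmat_E andbF /sgb mulr1; move: (h j).
by case: (xs S j); case: (ys S j); rewrite /= ?mul1r ?mulr1.
Qed.

Lemma q_mixed n (hn : (0 < n)%N) (S : {set 'I_(2 * n)}) (j1 j2 : 'I_n) :
  xs S j1 != ys S j1 -> xs S j2 = ys S j2 -> qS S = 0.
Proof.
move=> h1 h2; rewrite qS_E //.
rewrite (@prod_zero _ (fun j => Lb S j false false) j1);
  last by rewrite /Lb Lmat_E; move: h1; case: (xs _ _); case: (ys _ _); rewrite //= !mul0r.
rewrite (@prod_zero _ (fun j => Lb S j true true) j1);
  last by rewrite /Lb Lmat_E; move: h1; case: (xs _ _); case: (ys _ _); rewrite //= !mul0r.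
rewrite (@prod_zero _ (fun j => Lb S j false true) j2);
  last by rewrite /Lb Lmat_E h2 addbb /= !mul0r.
rewrite (@prod_zero _ (fun j => Lb S j true false) j2);
  last by rewrite /Lb Lmat_E h2 addbb /= !mul0r.
by rewrite !addr0 mul0r.
Qed.

Lemma herm_PD n (S : {set 'I_(2 * n)}) : (forall j : 'I_n, xs S j = ys S j) ->
  \prod_(j < n) sgb (xs S j) = 1 -> adjmx (majprod S) = majprod S.
Proof.
move=> h hs; rewrite majprod_tens (@adj_tens _ _ (fun j => sgb (xs S j))).
  by rewrite hs scale1r.
by move=> j; rewrite adj_Lmat /sgnL -h andbb (ps_PD h) andbF orbF.
Qed.

Lemma herm_PO n (h4 : (4 %| n)%N) (S : {set 'I_(2 * n)}) :
  (forall j : 'I_n, xs S j != ys S j) -> adjmx (majprod S) = majprod S.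
Proof.
move=> h; rewrite majprod_tens (@adj_tens _ _ (fun j => sgb (ssrnat.odd (n - j.+1)))).
  by rewrite prod_sg4 // scale1r.
move=> j; rewrite adj_Lmat /sgnL (ps_PO h); move: (h j).
by case: (xs S j); case: (ys S j).
Qed.

Lemma prod_if n (P : pred 'I_n) (c : algC) :
  \prod_(j < n) (if P j then c else 1) = c ^+ #|[set j | P j]|.
Proof.
rewrite -big_mkcond /= -prodr_const; apply: eq_bigl => j; by rewrite inE.
Qed.

Lemma term_eq n (hn : (0 < n)%N) (h4 : (4 %| n)%N) (S : {set 'I_(2 * n)}) :
  (\tr (majBasis S *m rhoGHZ n)) ^+ 2 = qS S ^+ 2 / (2 ^ n)%:R.
Proof.
rewrite /majBasis -scalemxAl mxtraceZ exprMn exprVn sqrtCK mulrC.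
rewrite /hermPart; case: ifP => hh; first by [].
rewrite -scalemxAl mxtraceZ -/(qS S).
suff -> : qS S = 0 by rewrite mulr0 expr0n.
case: (boolP [forall j : 'I_n, xs S j == ys S j]) => [/forallP hD | nD].
  have hD' : forall j : 'I_n, xs S j = ys S j.
    by move=> j; move: (hD j) => /eqP.
  rewrite (q_PD hn hD') !prod_if.
  case: (boolP (ssrnat.odd #|[set j : 'I_n | xs S j]|)) => ht.
    by rewrite exprNn -signr_odd ht expr1 mulN1r addrN mul0r.
  exfalso; move/negbT: hh; rewrite herm_PD ?eqxx //.
  by rewrite (@prod_if n (fun j => xs S j) (-1)) -signr_odd (negbTE ht).
case: (boolP [forall j : 'I_n, xs S j != ys S j]) => [/forallP hO | nO].
  by move/negbT: hh; rewrite (herm_PO h4 hO) eqxx.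
move: nD nO; rewrite !negb_forall => /existsP [j1 hj1] /existsP [j2 hj2].
apply: (@q_mixed n hn S j1 j2 hj1).
by move: hj2; rewrite negbK => /eqP.
Qed.

Lemma half_lt n (k : 'I_(2 * n)) : (k %/ 2 < n)%N.
Proof. have := ltn_ord k; rewrite ltn_divLR // => h; lia. Qed.
Definition half n (k : 'I_(2 * n)) : 'I_n := Ordinal (half_lt k).

Lemma e0_lt n (j : 'I_n) : (2 * j < 2 * n)%N. Proof. by rewrite ltn_pmul2l. Qed.
Lemma e1_lt n (j : 'I_n) : ((2 * j).+1 < 2 * n)%N.
Proof. have := ltn_ord j; lia. Qed.
Definition e0 n (j : 'I_n) : 'I_(2 * n) := Ordinal (e0_lt j).
Definition e1 n (j : 'I_n) : 'I_(2 * n) := Ordinal (e1_lt j).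

Lemma xsE n (S : {set 'I_(2 * n)}) (j : 'I_n) : xs S j = (e0 j \in S).
Proof. by rewrite -inS_val. Qed.
Lemma ysE n (S : {set 'I_(2 * n)}) (j : 'I_n) : ys S j = (e1 j \in S).
Proof. by rewrite -inS_val. Qed.

Lemma half_e0 n (j : 'I_n) : half (e0 j) = j.
Proof. by apply/val_inj; rewrite /= half2. Qed.
Lemma half_e1 n (j : 'I_n) : half (e1 j) = j.
Proof. by apply/val_inj; rewrite /= half2S. Qed.

Lemma k_split n (k : 'I_(2 * n)) : k = if ssrnat.odd k then e1 (half k) else e0 (half k).
Proof.
apply/val_inj; case: ifP => ho /=; have := divn_eq k 2; rewrite modn2 ho /=; lia.
Qed.

Definition DT n (T : {set 'I_n}) : {set 'I_(2 * n)} := [set k : 'I_(2 * n) | half k \in T].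
Definition OT n (f : {ffun 'I_n -> bool}) : {set 'I_(2 * n)} :=
  [set k : 'I_(2 * n) | ssrnat.odd k == f (half k)].

Lemma xs_DT n (T : {set 'I_n}) (j : 'I_n) : xs (DT T) j = (j \in T).
Proof. by rewrite xsE inE half_e0. Qed.
Lemma ys_DT n (T : {set 'I_n}) (j : 'I_n) : ys (DT T) j = (j \in T).
Proof. by rewrite ysE inE half_e1. Qed.
Lemma xs_OT n (f : {ffun 'I_n -> bool}) (j : 'I_n) : xs (OT f) j = ~~ f j.
Proof. by rewrite xsE inE half_e0 /= odd2; case: (f j). Qed.
Lemma ys_OT n (f : {ffun 'I_n -> bool}) (j : 'I_n) : ys (OT f) j = f j.
Proof. by rewrite ysE inE half_e1 /= ?odd2S ?odd2 /=; case: (f j). Qed.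

Lemma sum_pair m (G : nat -> nat) :
  (\sum_(0 <= k < 2 * m) G k = \sum_(0 <= j < m) (G (2 * j) + G (2 * j).+1))%N.
Proof.
elim: m => [|m IH]; first by rewrite !big_geq.
rewrite (_ : (2 * m.+1 = (2 * m).+1.+1)%N); last by lia.
by rewrite !big_nat_recr //= IH addnA.
Qed.

Lemma card_xy n (S : {set 'I_(2 * n)}) :
  #|S| = (\sum_(j < n) (xs S j + ys S j))%N.
Proof.
rewrite -sum1_card big_mkcond /=.
transitivity (\sum_(i < 2 * n) (if inS S i then 1 else 0))%N.
  by apply eq_bigr => i _; rewrite inS_val.
rewrite -(big_mkord xpredT (fun k => if inS S k then 1 else 0)%N) sum_pair big_mkord.
by apply eq_bigr => j _; rewrite /xs /ys; case: (inS S _); case: (inS S _).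
Qed.

Lemma card_DT n (T : {set 'I_n}) : #|DT T| = (2 * #|T|)%N.
Proof.
rewrite card_xy -sum1_card big_distrr /= [RHS]big_mkcond /=.
by apply eq_bigr => j _; rewrite xs_DT ys_DT; case: (j \in T).
Qed.

Lemma card_OT n (f : {ffun 'I_n -> bool}) : #|OT f| = n.
Proof.
rewrite card_xy (eq_bigr (fun _ => 1%N)); first by rewrite sum1_card card_ord.
by move=> j _; rewrite xs_OT ys_OT; case: (f j).
Qed.

Lemma sq_lemma t : (('i ^+ t + (- 'i) ^+ t) / 2) ^+ 2 = ((-1) ^+ t + 1) / 2 :> algC.
Proof.
have e : (- 'i) ^+ t = (-1) ^+ t * 'i ^+ t :> algC by exact: exprNn.
rewrite e.
have hw : ('i ^+ t) ^+ 2 = (-1) ^+ t :> algC by rewrite -exprM mulnC exprM sqrCi.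
move: hw; rewrite -(signr_odd _ t); set w := 'i ^+ t.
case: (ssrnat.odd t) => /= hw; rewrite ?expr1 ?expr0.
  by rewrite mulN1r subrr mul0r expr0n /= addNr mul0r.
have -> : (w + 1 * w) / 2 = w by field.
by rewrite hw; field.
Qed.

Definition PD n (S : {set 'I_(2 * n)}) := [forall j : 'I_n, xs S j == ys S j].
Definition PO n (S : {set 'I_(2 * n)}) := [forall j : 'I_n, xs S j != ys S j].

Lemma Dpart n (hn : (0 < n)%N) a :
  \sum_(S : {set 'I_(2 * n)} | (#|S| == a) && PD S) qS S ^+ 2 =
  \sum_(T : {set 'I_n} | (2 * #|T| == a)%N) ((-1) ^+ #|T| + 1) / 2.
Proof.
rewrite (reindex_onto (@DT n) (fun S => [set j : 'I_n | xs S j])) /=; last first.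
  move=> S /andP[_ /forallP hD]; apply/setP => k; rewrite inE inE.
  rewrite [in RHS](k_split k); case: (ssrnat.odd k); rewrite -?xsE -?ysE //.
  by move: (hD (half k)) => /eqP.
have PDT : forall T : {set 'I_n}, PD (DT T).
  by move=> T; apply/forallP => j; rewrite xs_DT ys_DT.
have sT : forall T : {set 'I_n}, [set j : 'I_n | xs (DT T) j] = T.
  by move=> T; apply/setP => j; rewrite inE xs_DT.
apply eq_big => [T|T _].
  by rewrite card_DT PDT sT eqxx !andbT.
rewrite (q_PD hn); last by move=> j; rewrite xs_DT ys_DT.
by rewrite !prod_if sT sq_lemma.
Qed.

Lemma Opart n (hn : (0 < n)%N) (h4 : (4 %| n)%N) a :
  \sum_(S : {set 'I_(2 * n)} | ((#|S| == a) && ~~ PD S) && PO S) qS S ^+ 2 =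
  \sum_(f : {ffun 'I_n -> bool} | n == a) ((-1) ^+ #|[set j | f j]| + 1) / 2.
Proof.
rewrite (reindex_onto (@OT n) (fun S => [ffun j : 'I_n => ys S j])) /=; last first.
  move=> S /andP[_ /forallP hO]; apply/setP => k; rewrite inE ffunE.
  rewrite [in RHS](k_split k); case: (ssrnat.odd k); rewrite -?xsE -?ysE //.
  by move: (hO (half k)); case: (xs S _); case: (ys S _).
have nPD : forall f : {ffun 'I_n -> bool}, ~~ PD (OT f).
  move=> f; apply/forallP => /(_ (Ordinal hn)); rewrite xs_OT ys_OT.
  by case: (f _).
have POT : forall f : {ffun 'I_n -> bool}, PO (OT f).
  by move=> f; apply/forallP => j; rewrite xs_OT ys_OT; case: (f j).
have sT : forall f : {ffun 'I_n -> bool}, [ffun j : 'I_n => ys (OT f) j] = f.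
  by move=> f; apply/ffunP => j; rewrite ffunE ys_OT.
apply eq_big => [f|f _].
  by rewrite card_OT nPD POT sT eqxx !andbT.
rewrite (q_PO hn h4); last by move=> j; rewrite xs_OT ys_OT; case: (f j).
rewrite !(@prod_if n (fun j => ys (OT f) j)) addrC sq_lemma.
have -> : [set j : 'I_n | ys (OT f) j] = [set j | f j].
  by apply/setP => j; rewrite !inE ys_OT.
by [].
Qed.

Lemma Mpart n (hn : (0 < n)%N) a :
  \sum_(S : {set 'I_(2 * n)} | ((#|S| == a) && ~~ PD S) && ~~ PO S) qS S ^+ 2 = 0.
Proof.
apply: big1 => S /andP[/andP[_ nD] nO].
move: nD nO; rewrite !negb_forall => /existsP [j1 hj1] /existsP [j2 hj2].
rewrite (@q_mixed n hn S j1 j2 hj1) ?expr0n //.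
by move: hj2; rewrite negbK => /eqP.
Qed.

Lemma Pweight_E n (hn : (0 < n)%N) (h4 : (4 %| n)%N) a :
  Pweight a (rhoGHZ n) =
  (\sum_(T : {set 'I_n} | (2 * #|T| == a)%N) ((-1) ^+ #|T| + 1) / 2 +
   \sum_(f : {ffun 'I_n -> bool} | n == a) ((-1) ^+ #|[set j | f j]| + 1) / 2)
  / (2 ^ n)%:R.
Proof.
rewrite /Pweight; under eq_bigr do rewrite (term_eq hn h4).
rewrite -mulr_suml (bigID (@PD n)) /= (bigID (@PO n) (fun S => (#|S| == a) && ~~ PD S)) /=.
by rewrite Mpart // addr0 Dpart // Opart.
Qed.

Lemma Dsum_E n a :
  \sum_(T : {set 'I_n} | (2 * #|T| == a)%N) ((-1) ^+ #|T| + 1) / 2 =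
  if ssrnat.odd a then 0
  else ('C(n, a %/ 2))%:R * (((-1) ^+ (a %/ 2) + 1) / 2) :> algC.
Proof.
case: ifP => ho.
  rewrite big_pred0 // => T; apply/negbTE; apply: contraTN ho => /eqP <-.
  by rewrite oddM.
rewrite (eq_bigl (fun T : {set 'I_n} => T \in [set T : {set 'I_n} | #|T| == a %/ 2]%N)).
  rewrite (eq_bigr (fun _ => ((-1) ^+ (a %/ 2) + 1) / 2 :> algC)).
    by rewrite sumr_const card_draws card_ord mulr_natl.
  by move=> T; rewrite inE => /eqP ->.
move=> T; rewrite inE.
have := divn_eq a 2; rewrite modn2 ho addn0 => ha.
by apply/eqP/eqP => h; lia.
Qed.

Lemma Osum_E n (hn : (0 < n)%N) a :
  \sum_(f : {ffun 'I_n -> bool} | n == a) ((-1) ^+ #|[set j | f j]| + 1) / 2 =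
  if n == a then (2 ^ (n - 1))%:R else 0 :> algC.
Proof.
case: (boolP (n == a)) => ha; last by rewrite big_pred0.
rewrite -mulr_suml big_split /=.
have -> : \sum_(f : {ffun 'I_n -> bool}) (-1) ^+ #|[set j | f j]| = 0 :> algC.
  under eq_bigr do rewrite -(@prod_if n (fun j => _ j) (-1)).
  rewrite -(bigA_distr_bigA (fun (j : 'I_n) (b : bool) => if b then -1 else 1 : algC)).
  apply: (@prod_zero n _ (Ordinal hn)).
  by rewrite big_bool /= addNr.
rewrite add0r sumr_const card_ffun card_bool card_ord.
have -> : n = (n - 1).+1 by lia.
rewrite subSS subn0 expnS natrM.
by field.
Qed.

Lemma oddE a : ssrnat.odd a = (a %% 2 == 1)%N.
Proof. by rewrite modn2; case: (ssrnat.odd a). Qed.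

Unset Implicit Arguments.

Theorem mainTheorem9 (n : nat) (hn : (0 < n)%N) (h4 : (4 %| n)%N)
    (alpha : nat) (halpha : (alpha <= 2 * n)%N) :
  ((ssrnat.odd alpha || (alpha %% 4 == 2)%N) -> Pweight alpha (rhoGHZ n) = 0) /\
  ((alpha %% 4 == 0)%N -> alpha != n ->
     Pweight alpha (rhoGHZ n) = ('C(n, alpha %/ 2))%:R / (2 ^ n)%:R) /\
  (Pweight n (rhoGHZ n) = (2 ^ (n - 1) + 'C(n, n %/ 2))%:R / (2 ^ n)%:R).
Proof.
have [k hk] := dvdnP h4.
split; [|split].
- move=> h; rewrite Pweight_E // Dsum_E Osum_E //.
  have -> : (n == alpha) = false.
    apply/negbTE/eqP => e; move: h; rewrite oddE -e; lia.
  case: ifP => ho; first by rewrite !add0r mul0r.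
  have h2 : ssrnat.odd (alpha %/ 2).
    move: h; rewrite ho /= => h; rewrite oddE; lia.
  by rewrite -signr_odd h2 expr1 addNr mul0r mulr0 !addr0 mul0r.
- move=> h0 hne; rewrite Pweight_E // Dsum_E Osum_E // eq_sym (negbTE hne).
  have -> : ssrnat.odd alpha = false by rewrite oddE; lia.
  rewrite -signr_odd.
  have -> : ssrnat.odd (alpha %/ 2) = false by rewrite oddE; lia.
  by rewrite expr0 addr0; congr (_ / _); field.
- rewrite Pweight_E // Dsum_E Osum_E // eqxx.
  have -> : ssrnat.odd n = false by rewrite oddE; lia.
  rewrite -signr_odd.
  have -> : ssrnat.odd (n %/ 2) = false by rewrite oddE; lia.
  have -> : (1 + 1) / 2 = 1 :> algC by field.
  by rewrite mulr1 natrD addrC.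
Qed.
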